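(* Let $X$ have a pdf $f$ satisfying Conditions (A) and (B) below, and let $D>0$. Let $H^*(D)=\inf\{H[Q(X)]: D(Q)\le D\}$ and $A^*(D)=\inf\{\mathrm{AoI}(S_{\mathrm z},Q,F^* ): D(Q)\le D\}$, both infima taken over quantizers. Then $$\tfrac32 H^*(D)\le A^*(D),$$ and, for any $\delta>0$ with $D(Q_{\mathrm{uni}}^\delta)\le D$, $$A^*(D)\le \mathrm{AoI}(S_{\mathrm z},Q_{\mathrm{uni}}^\delta,F_{\mathrm s}).$$
   Context: Let $X$ be a real random variable with pdf $f$. Condition (A): $f$ is continuous and differentiable, and its support is a bounded interval $I$. Condition (B): $\int_I f\log_2^2 f\,dx$ and $-\int_I f\log_2 f\,dx$ exist and are finite. Quantizers. A quantizer $Q$ partitions $I$ into intervals $[a_{i-1},a_i]$ with representation points $c_i$. Write $p_i=P(X\in[a_{i-1},a_i])$. The output entropy is $H[Q(X)]=-\sum_ip_i\log_2p_i$, and the distortion is $D(Q)=\sum_i\int_{a_{i-1}}^{a_i}(x-c_i)^2f(x)\,dx$. The uniform quantizer $Q_{\mathrm{uni}}^\delta$ partitions $I$ into consecutive cells of length $\delta$, with midpoint representation points. Codes. A real-valued code assigns lengths $l_i\in\mathbb R^+$ to the cells, subject to $\sum_i2^{-l_i}\le1$. The random codeword length is $L=l_i$ when $X$ is in cell $i$. Objective. Under zero-wait sampling, $\mathrm{AoI}(S_{\mathrm z},Q,l)=\frac{E[L^2]}{2E[L]}+E[L]$, and $\mathrm{AoI}(S_{\mathrm z},Q,F^* )=\inf_l\mathrm{AoI}(S_{\mathrm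 z},Q,l)$, the infimum over real-valued codes. $F_{\mathrm s}$ denotes the real-valued Shannon code $l_i=-\log_2p_i$. *)

(* Defs.v *)
From Stdlib Require Import Reals List.
From Coquelicot Require Import Coquelicot.
Open Scope R_scope.

(* base-2 logarithm; note Stdlib's ln 0 = 0, so p * log2 p = 0 at p = 0
   (the usual 0 log 0 = 0 convention). *)
Definition log2 (x : R) : R := ln x / ln 2.

Definition sumN (N : nat) (g : nat -> R) : R :=
  fold_right (fun i acc => g i + acc) 0 (seq 0 N).

Definition is_pdf_on (f : R -> R) (a b : R) : Prop :=
  a < b /\
  (forall x, 0 <= f x) /\
  (forall x, (x < a \/ b < x) -> f x = 0) /\
  (* the support (closure of {f > 0}) is all of [a,b] *)
  (forall x y, a <= x -> x < y -> y <= b -> exists z, x < z < y /\ 0 < f z) /\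
  ex_RInt f a b /\ RInt f a b = 1.

(* Condition (A): f continuous and differentiable on I (one-sided at the
   endpoints), support a bounded interval I = [a,b]. *)
Definition condA (f : R -> R) (a b : R) : Prop :=
  is_pdf_on f a b /\
  (forall x, a <= x <= b ->
     filterlim f (within (fun y => a <= y <= b) (locally x)) (locally (f x))) /\
  (forall x, a <= x <= b -> exists l : R,
     filterlim (fun y => (f y - f x) / (y - x))
       (within (fun y => a <= y <= b /\ y <> x) (locally x)) (locally l)).

Definition condB (f : R -> R) (a b : R) : Prop :=
  ex_RInt (fun x => f x * (log2 (f x)) ^ 2) a b /\
  ex_RInt (fun x => f x * log2 (f x)) a b.

(* A quantizer with N cells: cell i (0 <= i < N) is [bp i, bp (i+1)],
   with representation point rp i. *)
Record quantizer := Quantizer {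
  qN : nat;
  bp : nat -> R;
  rp : nat -> R
}.

Definition valid_quantizer (a b : R) (Q : quantizer) : Prop :=
  (1 <= qN Q)%nat /\ bp Q 0 = a /\ bp Q (qN Q) = b /\
  (forall i, (i < qN Q)%nat -> bp Q i < bp Q (S i)).

Definition cell_prob (f : R -> R) (Q : quantizer) (i : nat) : R :=
  RInt f (bp Q i) (bp Q (S i)).

Definition out_entropy (f : R -> R) (Q : quantizer) : R :=
  - sumN (qN Q) (fun i => cell_prob f Q i * log2 (cell_prob f Q i)).

Definition distortion (f : R -> R) (Q : quantizer) : R :=
  sumN (qN Q) (fun i => RInt (fun x => (x - rp Q i) ^ 2 * f x) (bp Q i) (bp Q (S i))).

Definition ceilR (x : R) : Z := (- (up (- x) - 1))%Z.

Definition uniform_quantizer (a b delta : R) : quantizer :=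
  let bpt := fun i : nat => Rmin (a + INR i * delta) b in
  Quantizer (Z.to_nat (ceilR ((b - a) / delta)))
            bpt
            (fun i => (bpt i + bpt (S i)) / 2).

(* real-valued code: lengths l_i in R^+ with Kraft sum_i 2^(-l_i) <= 1 *)
Definition valid_code (Q : quantizer) (l : nat -> R) : Prop :=
  (forall i, (i < qN Q)%nat -> 0 < l i) /\
  sumN (qN Q) (fun i => Rpower 2 (- l i)) <= 1.

Definition EL (f : R -> R) (Q : quantizer) (l : nat -> R) : R :=
  sumN (qN Q) (fun i => cell_prob f Q i * l i).

Definition EL2 (f : R -> R) (Q : quantizer) (l : nat -> R) : R :=
  sumN (qN Q) (fun i => cell_prob f Q i * (l i) ^ 2).

Definition AoI_zw (f : R -> R) (Q : quantizer) (l : nat -> R) : R :=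
  EL2 f Q l / (2 * EL f Q l) + EL f Q l.

Definition AoI_opt (f : R -> R) (Q : quantizer) : Rbar :=
  Glb_Rbar (fun v => exists l, valid_code Q l /\ v = AoI_zw f Q l).

Definition shannon_code (f : R -> R) (Q : quantizer) : nat -> R :=
  fun i => - log2 (cell_prob f Q i).

Definition Hstar (f : R -> R) (a b D : R) : Rbar :=
  Glb_Rbar (fun h => exists Q, valid_quantizer a b Q /\ distortion f Q <= D /\
                                h = out_entropy f Q).

Definition Astar (f : R -> R) (a b D : R) : Rbar :=
  Glb_Rbar (fun v => exists Q, valid_quantizer a b Q /\ distortion f Q <= D /\
                                Finite v = AoI_opt f Q).

(* Main.v *)
Require Import Defs.
From Stdlib Require Import Reals Lra Lia ZArith List.
From Coquelicot Require Import Coquelicot.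
Open Scope R_scope.

Lemma sumN_0 g : sumN 0 g = 0.
Proof. reflexivity. Qed.

Lemma sumN_S n g : sumN (S n) g = sumN n g + g n.
Proof.
  unfold sumN. rewrite seq_S, fold_right_app. simpl.
  generalize (g n). intro c. generalize (seq 0 n). induction l; simpl; [lra|]. rewrite IHl. lra.
Qed.

Lemma sumN_ext n g h : (forall i, (i < n)%nat -> g i = h i) -> sumN n g = sumN n h.
Proof.
  induction n; intros H; [reflexivity|]. rewrite !sumN_S, IHn, H; auto.
Qed.

Lemma sumN_le n g h : (forall i, (i < n)%nat -> g i <= h i) -> sumN n g <= sumN n h.
Proof.
  induction n; intros H; [rewrite !sumN_0; lra|]. rewrite !sumN_S.
  specialize (IHn (fun i Hi => H i ltac:(lia))). specialize (H n ltac:(lia)). lra.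
Qed.

Lemma sumN_plus n g h : sumN n (fun i => g i + h i) = sumN n g + sumN n h.
Proof. induction n; [rewrite !sumN_0; lra|]. rewrite !sumN_S, IHn. lra. Qed.

Lemma sumN_scal n c g : sumN n (fun i => c * g i) = c * sumN n g.
Proof. induction n; [rewrite !sumN_0; lra|]. rewrite !sumN_S, IHn. lra. Qed.


Lemma bp_mono a b Q : valid_quantizer a b Q ->
  forall i j, (i <= j <= qN Q)%nat -> bp Q i <= bp Q j.
Proof.
  intros (H1 & H2 & H3 & H4) i j Hij.
  induction j.
  - assert (i = 0)%nat by lia. subst; lra.
  - destruct (Nat.eq_dec i (S j)). subst; lra.
    specialize (H4 j ltac:(lia)). specialize (IHj ltac:(lia)). lra.
Qed.

Lemma bp_in a b Q : valid_quantizer a b Q ->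
  forall i, (i <= qN Q)%nat -> a <= bp Q i <= b.
Proof.
  intros HQ i Hi. pose proof HQ as (H1 & H2 & H3 & H4).
  split.
  - rewrite <- H2. apply (bp_mono a b Q HQ). lia.
  - rewrite <- H3. apply (bp_mono a b Q HQ). lia.
Qed.

Lemma cell_ex (f : R -> R) a b Q : ex_RInt f a b -> valid_quantizer a b Q ->
  forall i, (i < qN Q)%nat -> ex_RInt f (bp Q i) (bp Q (S i)).
Proof.
  intros Hf HQ i Hi.
  pose proof (bp_in a b Q HQ i ltac:(lia)).
  pose proof (bp_in a b Q HQ (S i) ltac:(lia)).
  pose proof (bp_mono a b Q HQ i (S i) ltac:(lia)).
  apply (ex_RInt_Chasles_1 f _ _ b). lra.
  apply (ex_RInt_Chasles_2 f a). lra. auto.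
Qed.

Lemma cell_sum (f : R -> R) a b Q : ex_RInt f a b -> valid_quantizer a b Q ->
  forall n, (n <= qN Q)%nat ->
  sumN n (cell_prob f Q) = RInt f a (bp Q n) /\ ex_RInt f a (bp Q n).
Proof.
  intros Hf HQ. pose proof HQ as (H1 & H2 & H3 & H4). induction n; intros Hn.
  - rewrite sumN_0, H2, RInt_point. split; auto. apply ex_RInt_point.
  - destruct (IHn ltac:(lia)) as [E X]. rewrite sumN_S, E.
    pose proof (cell_ex f a b Q Hf HQ n ltac:(lia)).
    unfold cell_prob. rewrite <- (RInt_Chasles f a (bp Q n) (bp Q (S n)) X H). split; [reflexivity|].
    apply (ex_RInt_Chasles f a (bp Q n)); auto.
Qed.

Lemma cell_total (f : R -> R) a b Q : is_pdf_on f a b -> valid_quantizer a b Q ->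
  sumN (qN Q) (cell_prob f Q) = 1.
Proof.
  intros (Hab & Hf0 & _ & _ & Hex & H1) HQ.
  destruct (cell_sum f a b Q Hex HQ (qN Q) ltac:(lia)) as [E _].
  rewrite E. destruct HQ as (_&_&->&_). auto.
Qed.

Lemma cell_nonneg (f : R -> R) a b Q : is_pdf_on f a b -> valid_quantizer a b Q ->
  forall i, (i < qN Q)%nat -> 0 <= cell_prob f Q i.
Proof.
  intros (Hab & Hf0 & _ & _ & Hex & H1) HQ i Hi.
  apply RInt_ge_0. pose proof (bp_mono a b Q HQ i (S i) ltac:(lia)). lra.
  apply (cell_ex f a b Q Hex HQ i Hi). intros; auto.
Qed.

Lemma sumN_ge0 n g : (forall i, (i < n)%nat -> 0 <= g i) -> 0 <= sumN n g.
Proof.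
  induction n; intros H; [rewrite sumN_0; lra|]. rewrite sumN_S.
  specialize (IHn (fun i Hi => H i ltac:(lia))). specialize (H n ltac:(lia)). lra.
Qed.

Lemma ln2_pos : 0 < ln 2.
Proof. rewrite <- ln_1. apply ln_increasing; lra. Qed.

Lemma gibbs_term p l : 0 <= p ->
  (p - Rpower 2 (- l)) / ln 2 <= p * l + p * log2 p.
Proof.
  intros Hp. pose proof ln2_pos as L.
  assert (Hq : 0 < Rpower 2 (-l)) by (unfold Rpower; apply exp_pos).
  destruct (Req_dec p 0) as [->|Hp0].
  - unfold Rdiv. rewrite !Rmult_0_l. apply Rmult_le_reg_r with (ln 2); auto.
    rewrite Rmult_assoc, Rinv_l by lra. lra.
  - assert (Hp' : 0 < p) by lra.
    set (q := Rpower 2 (-l)) in *.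
    assert (lnq : ln q = - l * ln 2) by (unfold q, Rpower; rewrite ln_exp; auto).
    pose proof (exp_ineq1_le (ln (q / p))) as E.
    rewrite exp_ln in E by (apply Rdiv_lt_0_compat; auto).
    rewrite ln_div in E by auto. rewrite lnq in E.
    unfold log2.
    apply Rmult_le_reg_r with (ln 2); auto.
    unfold Rdiv. rewrite Rmult_assoc, Rinv_l by lra.
    replace ((p * l + p * (ln p * / ln 2)) * ln 2) with (p * l * ln 2 + p * ln p)
      by (field; lra).
    assert (p * (1 + (- l * ln 2 - ln p)) <= p * (q / p)) by (apply Rmult_le_compat_l; lra).
    replace (p * (q / p)) with q in H by (field; lra). nra.
Qed.

Lemma code_bounds (f : R -> R) a b Q l : is_pdf_on f a b -> valid_quantizer a b Q ->
  valid_code Q l ->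
  0 <= EL f Q l /\ out_entropy f Q <= EL f Q l /\ 3/2 * EL f Q l <= AoI_zw f Q l.
Proof.
  intros Hf HQ [Hl Hk].
  pose proof (cell_total f a b Q Hf HQ) as Hs.
  pose proof (cell_nonneg f a b Q Hf HQ) as Hp.
  set (N := qN Q) in *.
  assert (EL0 : 0 <= EL f Q l).
  { unfold EL. apply sumN_ge0.
    intros i Hi. specialize (Hp i Hi). specialize (Hl i Hi). nra. }
  split; [auto|]. split.
  - assert (sumN N (fun i => (cell_prob f Q i - Rpower 2 (- l i)) / ln 2) <=
            sumN N (fun i => cell_prob f Q i * l i + cell_prob f Q i * log2 (cell_prob f Q i))).
    { apply sumN_le. intros; apply gibbs_term; auto. }
    rewrite sumN_plus in H.
    rewrite (sumN_ext N _ (fun i => / ln 2 * (cell_prob f Q i + (-1) * Rpower 2 (- l i)))) in H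
      by (intros; unfold Rdiv; ring).
    rewrite sumN_scal, sumN_plus, sumN_scal, Hs in H.
    unfold out_entropy, EL. fold N.
    assert (0 <= / ln 2 * (1 + -1 * sumN N (fun i => Rpower 2 (- l i)))).
    { apply Rmult_le_pos. left; apply Rinv_0_lt_compat, ln2_pos. lra. }
    lra.
  - assert (CS : EL f Q l ^ 2 <= EL2 f Q l).
    { set (m := EL f Q l).
      assert (0 <= sumN N (fun i => cell_prob f Q i * (l i - m) ^ 2)).
      { apply sumN_ge0.
        intros i Hi. specialize (Hp i Hi). apply Rmult_le_pos; auto. apply pow2_ge_0. }
      rewrite (sumN_ext N _ (fun i => cell_prob f Q i * (l i)^2 +
          ((-2 * m) * (cell_prob f Q i * l i) + m^2 * cell_prob f Q i))) in H by (intros; ring).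
      rewrite sumN_plus, sumN_plus, sumN_scal, sumN_scal, Hs in H.
      unfold EL2. fold N. change (sumN N (fun i => cell_prob f Q i * l i)) with m in H. nra. }
    unfold AoI_zw.
    destruct (Req_dec (EL f Q l) 0) as [E|E].
    + rewrite E. unfold Rdiv. replace (2 * 0) with 0 by ring. rewrite Rinv_0. lra.
    + assert (P : 0 < EL f Q l) by lra.
      assert (EL f Q l ^ 2 / (2 * EL f Q l) <= EL2 f Q l / (2 * EL f Q l)).
      { unfold Rdiv. apply Rmult_le_compat_r; auto. left; apply Rinv_0_lt_compat; lra. }
      replace (EL f Q l ^ 2 / (2 * EL f Q l)) with (EL f Q l / 2) in H by (field; lra).
      lra.
Qed.

Lemma ex_sub (f : R -> R) a b x y : a <= x -> x <= y -> y <= b -> ex_RInt f a b -> ex_RInt f x y.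
Proof.
  intros. apply (ex_RInt_Chasles_1 f _ _ b). lra.
  apply (ex_RInt_Chasles_2 f a). lra. auto.
Qed.

Lemma RInt_pos (f : R -> R) a b : condA f a b ->
  forall x y, a <= x -> x < y -> y <= b -> 0 < RInt f x y.
Proof.
  intros [(Hab & Hf0 & _ & Hsup & Hex & _) [Hc _]] x y Hx Hxy Hy.
  destruct (Hsup x y Hx Hxy Hy) as (z & Hz & Hfz).
  specialize (Hc z ltac:(lra)).
  destruct (proj1 (filterlim_locally f (f z)) Hc (mkposreal (f z / 2) ltac:(lra))) as [del Hdel].
  simpl in Hdel.
  set (r := Rmin (del / 2) (Rmin ((z - x) / 2) ((y - z) / 2))).
  assert (r_pos : 0 < r).
  { unfold r. pose proof (cond_pos del). repeat apply Rmin_pos; lra. }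
  assert (r1 : r <= del / 2) by apply Rmin_l.
  assert (r2 : r <= (z - x) / 2) by (unfold r; eapply Rle_trans; [apply Rmin_r|apply Rmin_l]).
  assert (r3 : r <= (y - z) / 2) by (unfold r; eapply Rle_trans; [apply Rmin_r|apply Rmin_r]).
  pose proof (cond_pos del).
  set (z1 := z - r). set (z2 := z + r).
  assert (Hw : forall w, z1 <= w <= z2 -> f z / 2 <= f w).
  { intros w Hw. assert (B : ball z del w).
    { unfold ball; simpl; unfold AbsRing_ball, abs, minus, plus, opp; simpl.
      unfold z1, z2 in Hw. apply Rabs_def1; lra. }
    specialize (Hdel w B ltac:(unfold z1, z2 in Hw; lra)).
    unfold ball in Hdel; simpl in Hdel; unfold AbsRing_ball, abs, minus, plus, opp in Hdel; simpl in Hdel.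
    apply Rabs_def2 in Hdel. lra. }
  assert (E1 : ex_RInt f x z1) by (apply (ex_sub f a b); unfold z1; auto; lra).
  assert (E2 : ex_RInt f z1 z2) by (apply (ex_sub f a b); unfold z1, z2; auto; lra).
  assert (E3 : ex_RInt f z2 y) by (apply (ex_sub f a b); unfold z2; auto; lra).
  rewrite <- (RInt_Chasles f x z1 y E1 (ex_RInt_Chasles f z1 z2 y E2 E3)).
  rewrite <- (RInt_Chasles f z1 z2 y E2 E3).
  assert (I1 : 0 <= RInt f x z1) by (apply RInt_ge_0; auto; unfold z1; lra).
  assert (I3 : 0 <= RInt f z2 y) by (apply RInt_ge_0; auto; unfold z2; lra).
  assert (I2 : RInt (fun _ => f z / 2) z1 z2 <= RInt f z1 z2).
  { apply RInt_le; auto. unfold z1, z2; lra. apply ex_RInt_const.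
    intros w Hw'. apply Hw. lra. }
  rewrite RInt_const in I2. unfold scal in I2; simpl in I2; unfold mult in I2; simpl in I2.
  assert (0 < (z2 - z1) * (f z / 2)) by (apply Rmult_lt_0_compat; unfold z1, z2; lra).
  unfold plus; simpl. lra.
Qed.

Lemma ceilR_spec x : IZR (ceilR x) >= x /\ IZR (ceilR x) < x + 1.
Proof.
  unfold ceilR. destruct (archimed (- x)) as [H1 H2].
  rewrite opp_IZR, minus_IZR. lra.
Qed.

Lemma uniform_valid a b delta : a < b -> 0 < delta ->
  valid_quantizer a b (uniform_quantizer a b delta).
Proof.
  intros Hab Hd. unfold valid_quantizer, uniform_quantizer; simpl.
  set (x := (b - a) / delta).
  assert (xp : 0 < x) by (unfold x; apply Rdiv_lt_0_compat; lra).
  destruct (ceilR_spec x) as [C1 C2].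
  assert (Cp : (0 < ceilR x)%Z) by (apply lt_IZR; simpl; lra).
  set (N := Z.to_nat (ceilR x)).
  assert (HN : INR N = IZR (ceilR x)) by (unfold N; rewrite INR_IZR_INZ, Z2Nat.id; lia || reflexivity).
  assert (dx : b - a = x * delta) by (unfold x; field; lra).
  split; [|split; [|split]].
  - apply (INR_le 1). rewrite HN. simpl.
    assert (1 <= ceilR x)%Z by lia. apply IZR_le in H. auto.
  - rewrite Rmult_0_l, Rplus_0_r. apply Rmin_left. lra.
  - apply Rmin_right. rewrite HN. nra.
  - intros i Hi. apply lt_INR in Hi. rewrite HN in Hi.
    assert (Hi' : INR i < x).
    { (* INR i is an integer < ceil x < x + 1, so INR i <= ceil x - 1 < x *)
      rewrite INR_IZR_INZ in *. apply lt_IZR in Hi.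
      assert (Z.of_nat i <= ceilR x - 1)%Z by lia. apply IZR_le in H.
      rewrite minus_IZR in H. lra. }
    replace (match i with 0%nat => 1 | S _ => INR i + 1 end) with (INR i + 1) by (destruct i; simpl; lra).
    rewrite Rmin_left by nra.
    apply Rmin_glb_lt; nra.
Qed.

Lemma glb_fin (E : R -> Prop) x0 : (forall x, E x -> 0 <= x) -> E x0 ->
  exists v, Glb_Rbar E = Finite v /\ 0 <= v /\ (forall x, E x -> v <= x) /\
    (forall m, (forall x, E x -> m <= x) -> m <= v).
Proof.
  intros H0 Hx0. destruct (Glb_Rbar_correct E) as [lb glb].
  assert (L : Rbar_le 0 (Glb_Rbar E)) by (apply glb; intros x Hx; simpl; auto).
  assert (U : Rbar_le (Glb_Rbar E) x0) by (apply lb; auto).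
  destruct (Glb_Rbar E) as [v| |] eqn:Eq; simpl in L, U; try contradiction.
  exists v. split; auto. split; auto. split.
  - intros x Hx. specialize (lb x Hx). simpl in lb. auto.
  - intros m Hm. assert (Rbar_le m (Finite v)) by (apply glb; intros x Hx; simpl; auto). auto.
Qed.

Lemma sumN_single n g j : (forall i, (i < n)%nat -> 0 <= g i) -> (j < n)%nat -> g j <= sumN n g.
Proof.
  induction n; intros H Hj; [lia|]. rewrite sumN_S.
  destruct (Nat.eq_dec j n).
  - subst. pose proof (sumN_ge0 n g (fun i Hi => H i ltac:(lia))). lra.
  - specialize (IHn (fun i Hi => H i ltac:(lia)) ltac:(lia)). specialize (H n ltac:(lia)). lra.
Qed.

Lemma sumN_two n g i j : (forall k, (k < n)%nat -> 0 <= g k) -> (i < n)%nat -> (j < n)%nat ->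
  i <> j -> g i + g j <= sumN n g.
Proof.
  intros H Hi Hj Hij.
  rewrite (sumN_ext n g (fun k => (if Nat.eqb k j then 0 else g k) + (if Nat.eqb k j then g k else 0)))
    by (intros k _; destruct (Nat.eqb k j); lra).
  rewrite sumN_plus.
  assert (A1 : g i <= sumN n (fun k => if Nat.eqb k j then 0 else g k)).
  { replace (g i) with (if Nat.eqb i j then 0 else g i) at 1
      by (destruct (Nat.eqb_spec i j); [lia|reflexivity]).
    apply (sumN_single n (fun k => if Nat.eqb k j then 0 else g k)); auto.
    intros k Hk; destruct (Nat.eqb k j); [lra|auto]. }
  assert (A2 : g j <= sumN n (fun k => if Nat.eqb k j then g k else 0)).
  { replace (g j) with (if Nat.eqb j j then g j else 0) at 1 by (rewrite Nat.eqb_refl; reflexivity).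
    apply (sumN_single n (fun k => if Nat.eqb k j then g k else 0)); auto.
    intros k Hk; destruct (Nat.eqb k j); [auto|lra]. }
  lra.
Qed.

Lemma opt_le_shannon (f : R -> R) a b Q : condA f a b -> valid_quantizer a b Q ->
  exists v, AoI_opt f Q = Finite v /\ v <= AoI_zw f Q (shannon_code f Q).
Proof.
  intros HA HQ. pose proof HA as [Hf _].
  pose proof (cell_total f a b Q Hf HQ) as Hs.
  pose proof (cell_nonneg f a b Q Hf HQ) as Hp.
  set (E := fun v => exists l, valid_code Q l /\ v = AoI_zw f Q l).
  assert (E0 : forall x, E x -> 0 <= x).
  { intros x (l & Hl & ->). destruct (code_bounds f a b Q l Hf HQ Hl) as (X & _ & Y). lra. }
  pose proof HQ as (H1 & H2 & H3 & H4).
  destruct (Nat.eq_dec (qN Q) 1) as [N1|N2].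
  - rewrite N1 in Hs. rewrite sumN_S, sumN_0, Rplus_0_l in Hs.
    assert (Ee : forall eps, 0 < eps -> E (3/2 * eps)).
    { intros eps He. exists (fun _ => eps). split.
      - split. intros; auto. rewrite N1, sumN_S, sumN_0, Rplus_0_l.
        rewrite <- (Rpower_O 2) by lra. left. apply Rpower_lt; lra.
      - unfold AoI_zw, EL, EL2. rewrite N1, !sumN_S, !sumN_0, !Rplus_0_l, Hs. field. lra. }
    destruct (glb_fin E (3/2) E0 ltac:(replace (3/2) with (3/2*1) by ring; apply Ee; lra))
      as (v & Ev & v0 & vl & vg).
    exists v. split; [exact Ev|].
    assert (Z : AoI_zw f Q (shannon_code f Q) = 0).
    { unfold AoI_zw, EL, EL2, shannon_code, log2. rewrite N1, !sumN_S, !sumN_0, !Rplus_0_l, Hs, ln_1.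
      unfold Rdiv. rewrite !Rmult_0_l. rewrite Ropp_0, !Rmult_0_r. rewrite Rinv_0. ring. }
    rewrite Z.
    apply Rnot_lt_le. intro vp.
    specialize (vl _ (Ee (v / 3) ltac:(lra))). lra.
  - assert (pp : forall i, (i < qN Q)%nat -> 0 < cell_prob f Q i).
    { intros i Hi. unfold cell_prob. apply (RInt_pos f a b HA).
      apply (bp_in a b Q HQ). lia. apply H4; auto. apply (bp_in a b Q HQ). lia. }
    assert (p1 : forall i, (i < qN Q)%nat -> cell_prob f Q i < 1).
    { intros i Hi. set (j := if Nat.eqb i 0 then 1%nat else 0%nat).
      assert (Hj : (j < qN Q)%nat) by (unfold j; destruct (Nat.eqb_spec i 0); lia).
      assert (Hij : i <> j) by (unfold j; destruct (Nat.eqb_spec i 0); lia).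
      pose proof (sumN_two (qN Q) (cell_prob f Q) i j Hp Hi Hj Hij).
      pose proof (pp j Hj). lra. }
    assert (Vs : valid_code Q (shannon_code f Q)).
    { split.
      - intros i Hi. unfold shannon_code, log2.
        pose proof (pp i Hi). pose proof (p1 i Hi). pose proof ln2_pos.
        assert (ln (cell_prob f Q i) < 0) by (rewrite <- ln_1; apply ln_increasing; lra).
        assert (ln (cell_prob f Q i) / ln 2 < 0) by (apply Rdiv_neg_pos; auto).
        lra.
      - apply Rle_trans with (sumN (qN Q) (cell_prob f Q)); [|lra]. right. apply sumN_ext. intros i Hi.
        unfold shannon_code, log2, Rpower. rewrite Ropp_involutive.
        pose proof ln2_pos.
        replace (ln (cell_prob f Q i) / ln 2 * ln 2) with (ln (cell_prob f Q i)) by (field; lra).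
        apply exp_ln, pp; auto. }
    assert (ES : E (AoI_zw f Q (shannon_code f Q))) by (exists (shannon_code f Q); auto).
    destruct (glb_fin E _ E0 ES) as (v & Ev & v0 & vl & vg).
    exists v. split; auto.
Qed.

Theorem lemma2 (f : R -> R) (a b D : R) :
  condA f a b -> condB f a b -> 0 < D ->
  Rbar_le (Rbar_mult (3 / 2) (Hstar f a b D)) (Astar f a b D) /\
  (forall delta : R, 0 < delta ->
     distortion f (uniform_quantizer a b delta) <= D ->
     Rbar_le (Astar f a b D)
       (Finite (AoI_zw f (uniform_quantizer a b delta)
                  (shannon_code f (uniform_quantizer a b delta))))).
Proof.
  intros HA HB HD. pose proof HA as [Hf _]. split.
  - unfold Astar. destruct (Glb_Rbar_correct (fun v => exists Q, valid_quantizer a b Q /\ distortion f Q <= D /\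
                                Finite v = AoI_opt f Q)) as [_ glb].
    apply glb. intros x (Q & HQ & Hd & Hx).
    assert (HH : Rbar_le (Hstar f a b D) (out_entropy f Q)).
    { unfold Hstar. destruct (Glb_Rbar_correct (fun h => exists Q, valid_quantizer a b Q /\ distortion f Q <= D /\
                                h = out_entropy f Q)) as [lb _].
      apply lb. eauto. }
    assert (HO : Rbar_le (3/2 * out_entropy f Q) x).
    { rewrite Hx. unfold AoI_opt.
      destruct (Glb_Rbar_correct (fun v => exists l, valid_code Q l /\ v = AoI_zw f Q l)) as [_ g2].
      apply g2. intros y (l & Hl & ->). simpl.
      destruct (code_bounds f a b Q l Hf HQ Hl) as (X & Y & Z). lra. }
    simpl in HO.
    destruct (Hstar f a b D) as [h| |]; simpl in HH |- *.
    + lra.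
    + contradiction.
    + destruct (Rle_dec 0 (3/2)) as [P|P]; [|lra]. destruct (Rle_lt_or_eq_dec 0 (3/2) P); [simpl; auto|lra].
  - intros delta Hd Hdist.
    destruct Hf as (Hab & _).
    pose proof (uniform_valid a b delta Hab Hd) as HU.
    destruct (opt_le_shannon f a b _ HA HU) as (v & Ev & Hv).
    apply Rbar_le_trans with (Finite v); [|simpl; auto].
    unfold Astar. destruct (Glb_Rbar_correct (fun v => exists Q, valid_quantizer a b Q /\ distortion f Q <= D /\
                                Finite v = AoI_opt f Q)) as [lb _].
    apply lb. exists (uniform_quantizer a b delta). auto.
Qed.
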